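(* Let $\mathcal H_m$ denote the set of $2$-regular graphs on $m$ vertices containing no subgraph isomorphic to $K_{2,2}$ (i.e., disjoint unions of cycles, none of length $4$), and let $$\mathcal G_n = \{K_1 * (K_1 + H) : H \in \mathcal H_{n-2}\} \cup \{K_1 * (K_2 + H) : H \in \mathcal H_{n-3}\} \cup \{K_1 * (P_4 + H) : H \in \mathcal H_{n-5}\}.$$ Then every graph in $\mathcal G_n$ is $K_{2,3}$-saturated and has exactly $2n-3$ edges.
   Context: All graphs are finite and simple. $K_m$ is the complete graph and $P_m$ the path on $m$ vertices. For graphs $G,H$ on disjoint vertex sets, $G+H$ is their disjoint union, and the join $G*H$ is obtained from $G+H$ by adding all edges $xy$ with $x \in V(G)$, $y \in V(H)$. A graph $G$ is $K_{2,3}$-saturated if $G$ contains no subgraph isomorphic to $K_{2,3}$, but for every pair of nonadjacent vertices $u,v$, the graph $G+uv$ contains a subgraph isomorphic to $K_{2,3}$. *)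

(* Defs.v *)
From mathcomp Require Import all_boot.
Set Implicit Arguments. Unset Strict Implicit. Unset Printing Implicit Defensive.

Definition simple_graph (T : finType) (e : rel T) : Prop :=
  symmetric e /\ irreflexive e.

Definition edges (T : finType) (e : rel T) : {set {set T}} :=
  [set [set p.1; p.2] | p in [set p : T * T | e p.1 p.2]].

Definition has_subgraph (F T : finType) (eF : rel F) (e : rel T) : Prop :=
  exists f : F -> T, injective f /\ forall x y, eF x y -> e (f x) (f y).

Definition Kbip (s t : nat) : rel ('I_s + 'I_t)%type :=
  fun x y => match x, y with
             | inl _, inr _ | inr _, inl _ => true
             | _, _ => false
             end.

Arguments Kbip : clear implicits.

Definition Kcomp (m : nat) : rel 'I_m := fun x y => x != y.
Definition Path (m : nat) : rel 'I_m :=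
  fun x y => (x.+1 == y :> nat) || (y.+1 == x :> nat).

Arguments Kcomp : clear implicits.
Arguments Path : clear implicits.

Definition dunion (A B : finType) (eA : rel A) (eB : rel B) : rel (A + B)%type :=
  fun x y => match x, y with
             | inl a, inl a' => eA a a'
             | inr b, inr b' => eB b b'
             | _, _ => false
             end.
Definition gjoin (A B : finType) (eA : rel A) (eB : rel B) : rel (A + B)%type :=
  fun x y => match x, y with
             | inl a, inl a' => eA a a'
             | inr b, inr b' => eB b b'
             | _, _ => true
             end.

Definition add_edge (T : finType) (e : rel T) (u v : T) : rel T :=
  fun x y => [|| e x y, (x == u) && (y == v) | (x == v) && (y == u)].

Definition K23_saturated (T : finType) (e : rel T) : Prop :=
  ~ has_subgraph (Kbip 2 3) e /\
  forall u v : T, u != v -> ~~ e u v -> has_subgraph (Kbip 2 3) (add_edge e u v).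

Definition two_regular (T : finType) (e : rel T) : Prop :=
  forall v : T, #|[set w | e v w]| = 2.

Definition in_Hfam (m : nat) (H : rel 'I_m) : Prop :=
  simple_graph H /\ two_regular H /\ ~ has_subgraph (Kbip 2 2) H.

(* Main.v *)
Require Import Defs.
From mathcomp Require Import all_boot.
From Stdlib Require Import Lia.
Set Implicit Arguments. Unset Strict Implicit. Unset Printing Implicit Defensive.

Lemma inl_eq (A B : eqType) (a b : A) : (inl a == inl b :> A + B) = (a == b).
Proof. by apply/eqP/eqP => [[]|->]. Qed.
Lemma inr_eq (A B : eqType) (a b : B) : (inr a == inr b :> A + B) = (a == b).
Proof. by apply/eqP/eqP => [[]|->]. Qed.
Lemma inl_inr (A B : eqType) (a : A) (b : B) : (inl a == inr b :> A + B) = false.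
Proof. by apply/eqP. Qed.
Lemma inr_inl (A B : eqType) (a : A) (b : B) : (inr b == inl a :> A + B) = false.
Proof. by apply/eqP. Qed.

Lemma K23b (T : finType) (g : rel T) : symmetric g -> forall x y z1 z2 z3,
  uniq [:: x; y; z1; z2; z3] -> g x z1 -> g x z2 -> g x z3 -> g y z1 -> g y z2 -> g y z3 ->
  has_subgraph (Kbip 2 3) g.
Proof.
move=> gs x y z1 z2 z3 U g1 g2 g3 g4 g5 g6.
move: U; rewrite /= !inE !negb_or.
move=> /and4P[/and4P[xy xz1 xz2 xz3] /and3P[yz1 yz2 yz3] /andP[z12 z13] /andP[z23 _]].
exists (fun s => match s with inl i => if val i == 0 then x else y
  | inr j => if val j == 0 then z1 else if val j == 1 then z2 else z3 end).
split.
- move=> [[[|[|i]] Hi]|[[|[|[|j]]] Hj]] [[[|[|i']] Hi']|[[|[|[|j']]] Hj']] //=;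
  try (by move=> _; congr (_ _); apply: val_inj);
  move=> E; subst;
  match goal with H : is_true (?a != ?a) |- _ => by rewrite eqxx in H end.
- move=> [[[|[|i]] Hi]|[[|[|[|j]]] Hj]] [[[|[|i']] Hi']|[[|[|[|j']]] Hj']] //= _;
  by rewrite gs.
Qed.

Lemma K22b (T : finType) (g : rel T) : symmetric g -> forall x y z1 z2,
  uniq [:: x; y; z1; z2] -> g x z1 -> g x z2 -> g y z1 -> g y z2 ->
  has_subgraph (Kbip 2 2) g.
Proof.
move=> gs x y z1 z2 U g1 g2 g4 g5.
move: U; rewrite /= !inE !negb_or.
move=> X; move: X; move=> /and4P[/and3P[xy xz1 xz2] /andP[yz1 yz2] z12 _].
exists (fun s => match s with inl i => if val i == 0 then x else y
  | inr j => if val j == 0 then z1 else z2 end).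
split.
- move=> [[[|[|i]] Hi]|[[|[|j]] Hj]] [[[|[|i']] Hi']|[[|[|j']] Hj']] //=;
  try (by move=> _; congr (_ _); apply: val_inj);
  move=> E; subst;
  match goal with H : is_true (?a != ?a) |- _ => by rewrite eqxx in H end.
- move=> [[[|[|i]] Hi]|[[|[|j]] Hj]] [[[|[|i']] Hi']|[[|[|j']] Hj']] //= _;
  by rewrite gs.
Qed.

Definition deg2 (T : finType) (e : rel T) := forall v x y z, e v x -> e v y -> e v z -> x != y -> x != z -> y != z -> False.
Definition cn1 (T : finType) (e : rel T) := forall p q x y, p != q -> x != y -> e p x -> e q x -> e p y -> e q y -> False.
Definition two_nb (T : finType) (e : rel T) u := exists u1 u2, [/\ u1 != u2, e u u1 & e u u2].
Definition sq_nb (T : finType) (e : rel T) u v := exists w c, [/\ w != u, c != v, e u c, e w c & e w v].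
Definition satc (T : finType) (e : rel T) u v := [\/ two_nb e u, two_nb e v, sq_nb e u v | sq_nb e v u].
Definition satp (T : finType) (e : rel T) := forall u v, u != v -> ~~ e u v -> satc e u v.

Notation G e := (gjoin (Kcomp 1) e).

Lemma K23free (B : finType) (e : rel B) : deg2 e -> cn1 e ->
  forall a0 a1 c0 c1 c2 : 'I_1 + B, a0 != a1 -> c0 != c1 -> c0 != c2 -> c1 != c2 ->
   a0 != c0 -> a0 != c1 -> a0 != c2 -> a1 != c0 -> a1 != c1 -> a1 != c2 ->
   G e a0 c0 -> G e a0 c1 -> G e a0 c2 -> G e a1 c0 -> G e a1 c1 -> G e a1 c2 -> False.
Proof.
move=> D C [[[|?] i0]|x0] [[[|?] i1]|x1] [[[|?] k0]|y0] [[[|?] k1]|y1] [[[|?] k2]|y2] //;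
rewrite /= ?inl_eq ?inr_eq ?inl_inr ?inr_inl ?eqxx //= => *;
first [ by apply: (D x1 y0 y1 y2) | by apply: (D x0 y0 y1 y2)
      | by apply: (C x0 x1 y1 y2) | by apply: (C x0 x1 y0 y2) | by apply: (C x0 x1 y0 y1) ].
Qed.

Lemma noK23 (B : finType) (e : rel B) : deg2 e -> cn1 e -> ~ has_subgraph (Kbip 2 3) (G e).
Proof.
move=> D C [f [fi fe]].
have N : forall a b, a != b -> f a != f b by move=> a b; rewrite (inj_eq fi).
pose o2 := @Ordinal 2 1 isT; pose p1 := @Ordinal 3 1 isT; pose p2 := @Ordinal 3 2 isT.
apply: (K23free D C (a0 := f (inl ord0)) (a1 := f (inl o2)) (c0 := f (inr ord0)) (c1 := f (inr p1)) (c2 := f (inr p2)));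
 try (apply: N; by rewrite ?inl_eq ?inr_eq ?inl_inr ?inr_inl);
 by apply: fe.
Qed.


Lemma add_sym (T : finType) (e : rel T) u v : symmetric e -> symmetric (add_edge e u v).
Proof. move=> es x y; rewrite /add_edge es; by case: (x == u); case: (y == v); case: (x == v); case: (y == u); rewrite ?orbF ?orbT. Qed.

Lemma add_swap (T : finType) (e : rel T) u v x y : add_edge e u v x y = add_edge e v u x y.
Proof. by rewrite /add_edge orbCA orbC orbA. Qed.

Lemma sub_mono (F T : finType) (eF : rel F) (e1 e2 : rel T) :
  (forall x y, e1 x y -> e2 x y) -> has_subgraph eF e1 -> has_subgraph eF e2.
Proof. move=> h [f [fi fe]]; exists f; split => // x y /fe; exact: h. Qed.

Lemma Gsym (B : finType) (e : rel B) : symmetric e -> symmetric (G e).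
Proof. by move=> es [[[|?] ?]|x] [[[|?] ?]|y] //=; rewrite es. Qed.

Lemma sat_one (B : finType) (e : rel B) : symmetric e -> irreflexive e -> forall x y, x != y -> ~~ e x y ->
  two_nb e x \/ sq_nb e x y -> has_subgraph (Kbip 2 3) (add_edge (G e) (inr x) (inr y)).
Proof.
move=> es ei x y xy nxy [[u1 [u2 [u12 xu1 xu2]]]|[w [c [wx cy xc wc wy]]]].
- have u1y : u1 != y by apply: contraNneq nxy => <-.
  have u2y : u2 != y by apply: contraNneq nxy => <-.
  have xu1' : x != u1 by apply: contraTneq xu1 => ->; rewrite ei.
  have xu2' : x != u2 by apply: contraTneq xu2 => ->; rewrite ei.
  apply: (K23b (add_sym _ _ (Gsym es)) (x := inl ord0) (y := inr x) (z1 := inr u1) (z2 := inr u2) (z3 := inr y));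
   rewrite /add_edge /= ?xu1 ?xu2 ?eqxx ?orbT //.
  by rewrite !inE ?inr_eq ?inl_inr ?inr_inl !negb_or ?xu1' ?xu2' ?xy ?u12 ?u1y ?u2y ?xc' ?wc' ?wy' ?cy ?xw.
- have xc' : x != c by apply: contraTneq xc => ->; rewrite ei.
  have wc' : w != c by apply: contraTneq wc => ->; rewrite ei.
  have wy' : w != y by apply: contraTneq wy => ->; rewrite ei.
  apply: (K23b (add_sym _ _ (Gsym es)) (x := inr x) (y := inr w) (z1 := inr c) (z2 := inr y) (z3 := inl ord0));
   rewrite /add_edge /= ?xc ?wc ?wy ?eqxx ?orbT //.
  have xw : x != w by rewrite eq_sym.
 by rewrite !inE ?inr_eq ?inl_inr ?inr_inl !negb_or ?xu1' ?xu2' ?xy ?u12 ?u1y ?u2y ?xc' ?wc' ?wy' ?cy ?xw.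
Qed.

Lemma satG (B : finType) (e : rel B) : symmetric e -> irreflexive e -> satp e ->
  forall u v, u != v -> ~~ G e u v -> has_subgraph (Kbip 2 3) (add_edge (G e) u v).
Proof.
move=> es ei S [[[|?] i]|x] [[[|?] j]|y] //= uv nuv.
rewrite inr_eq in uv.
have vu : y != x by rewrite eq_sym.
have nvu : ~~ e y x by rewrite es.
case: (S x y uv nuv) => [h|h|h|h].
- by apply: sat_one => //; left.
- apply: (sub_mono (e1 := add_edge (G e) (inr y) (inr x))) => [a b|]; first by rewrite add_swap.
  by apply: sat_one => //; left.
- by apply: sat_one => //; right.
- apply: (sub_mono (e1 := add_edge (G e) (inr y) (inr x))) => [a b|]; first by rewrite add_swap.
  by apply: sat_one => //; right.
Qed.



Lemma Dsym (A B : finType) (eA : rel A) (eB : rel B) : symmetric eA -> symmetric eB -> symmetric (dunion eA eB).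
Proof. by move=> sa sb [x|x] [y|y] //=. Qed.
Lemma Dirr (A B : finType) (eA : rel A) (eB : rel B) : irreflexive eA -> irreflexive eB -> irreflexive (dunion eA eB).
Proof. by move=> sa sb [x|x] /=. Qed.
Lemma Ddeg2 (A B : finType) (eA : rel A) (eB : rel B) : deg2 eA -> deg2 eB -> deg2 (dunion eA eB).
Proof.
move=> da db [v|v] [x|x] [y|y] [z|z] //=; rewrite ?inl_eq ?inr_eq; [exact: da | exact: db].
Qed.
Lemma Dcn1 (A B : finType) (eA : rel A) (eB : rel B) : cn1 eA -> cn1 eB -> cn1 (dunion eA eB).
Proof.
move=> da db [p|p] [q|q] [x|x] [y|y] //=; rewrite ?inl_eq ?inr_eq; [exact: da | exact: db].
Qed.
Lemma Dtwo_l (A B : finType) (eA : rel A) (eB : rel B) a : two_nb eA a -> two_nb (dunion eA eB) (inl a).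
Proof. by move=> [u1 [u2 [? ? ?]]]; exists (inl u1), (inl u2); rewrite /= inl_eq. Qed.
Lemma Dtwo_r (A B : finType) (eA : rel A) (eB : rel B) a : two_nb eB a -> two_nb (dunion eA eB) (inr a).
Proof. by move=> [u1 [u2 [? ? ?]]]; exists (inr u1), (inr u2); rewrite /= inr_eq. Qed.
Lemma Dsq (A B : finType) (eA : rel A) (eB : rel B) a b : sq_nb eA a b -> sq_nb (dunion eA eB) (inl a) (inl b).
Proof. by move=> [w [c [? ? ? ? ?]]]; exists (inl w), (inl c); rewrite /= !inl_eq. Qed.
Lemma Dsat (A B : finType) (eA : rel A) (eB : rel B) : satp eA -> (forall h, two_nb eB h) -> satp (dunion eA eB).
Proof.
move=> sa tb [a|a] [b|b] /=; rewrite ?inl_eq ?inr_eq => ab nab.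
- case: (sa a b ab nab) => h.
  + by apply: Or41; apply: Dtwo_l.
  + by apply: Or42; apply: Dtwo_l.
  + by apply: Or43; apply: Dsq.
  + by apply: Or44; apply: Dsq.
- by apply: Or42; apply: Dtwo_r.
- by apply: Or41; apply: Dtwo_r.
- by apply: Or41; apply: Dtwo_r.
Qed.

Lemma Hsym (m : nat) (H : rel 'I_m) (HH : in_Hfam H) : symmetric H. Proof. by case: HH => [[]]. Qed.
Lemma Hirr (m : nat) (H : rel 'I_m) (HH : in_Hfam H) : irreflexive H. Proof. by case: HH => [[]]. Qed.
Lemma Hdeg (m : nat) (H : rel 'I_m) (HH : in_Hfam H) v : #|[set w | H v w]| = 2. Proof. by case: HH => _ [R _]; apply: R. Qed.
Lemma Htwo (m : nat) (H : rel 'I_m) (HH : in_Hfam H) h : two_nb H h.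
Proof.
have : 1 < #|[set w | H h w]| by rewrite (Hdeg HH).
by case/card_gt1P => x [y [Hx Hy xy]]; rewrite !inE in Hx Hy; exists x, y.
Qed.
Lemma Hdeg2 (m : nat) (H : rel 'I_m) (HH : in_Hfam H) : deg2 H.
Proof.
move=> v x y z vx vy vz xy xz yz.
have := Hdeg HH v.
rewrite (cardsD1 x) inE vx.
have : 1 < #|[set w | H v w] :\ x|.
  apply/card_gt1P; exists y, z; split => //; rewrite !inE ?vy ?vz andbT eq_sym //.
by case: #|_ :\ x| => [|[|]].
Qed.
Lemma Hcn1 (m : nat) (H : rel 'I_m) (HH : in_Hfam H) : cn1 H.
Proof.
move=> p q x y pq xy px qx py qy.
have hs := Hsym HH; have hi := Hirr HH.
case: HH => _ [_ N]; apply: N.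
have ne : forall a b, H a b -> a != b by move=> a b hab; apply: contraTneq hab => ->; rewrite hi.
apply: (K22b hs (x := p) (y := q) (z1 := x) (z2 := y)) => //.
by rewrite /= !inE !negb_or pq (ne _ _ px) (ne _ _ py) (ne _ _ qx) (ne _ _ qy) xy.
Qed.
Lemma Hsum (m : nat) (H : rel 'I_m) (HH : in_Hfam H) : \sum_(x : 'I_m) \sum_(y : 'I_m) (H x y : nat) = 2 * m.
Proof.
transitivity (\sum_(x : 'I_m) 2).
  apply: eq_bigr => x _; rewrite -(Hdeg HH x) -sum1dep_card [RHS]big_mkcond /=.
  by apply: eq_bigr => y _; case: (H x y).
by rewrite sum_nat_const card_ord mulnC.
Qed.


Lemma set2_eq (T : finType) (x y a b : T) : x != y ->
  ([set x; y] == [set a; b]) = ((x == a) && (y == b)) || ((x == b) && (y == a)).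
Proof.
move=> xy; apply/idP/idP.
- move/eqP=> E.
  have : x \in [set a; b] by rewrite -E !inE eqxx.
  have : y \in [set a; b] by rewrite -E !inE eqxx orbT.
  rewrite !inE => /orP[] /eqP yv /orP[] /eqP xv; rewrite xv yv ?eqxx ?orbT //;
   by move: xy; rewrite xv yv eqxx.
- by case/orP=> /andP[/eqP -> /eqP ->] //; rewrite setUC.
Qed.

Lemma edges2 (T : finType) (e : rel T) : symmetric e -> irreflexive e ->
  2 * #|edges e| = \sum_(x : T) \sum_(y : T) (e x y : nat).
Proof.
move=> es ei.
rewrite pair_bigA /=.
transitivity (\sum_(p : T * T | e p.1 p.2) 1); last first.
  by rewrite big_mkcond; apply: eq_bigr => p _; case: (e _ _).
rewrite (partition_big (fun p : T * T => [set p.1; p.2]) (mem (edges e))) /=; last first.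
  by move=> p hp; rewrite /edges; apply/imsetP; exists p => //; rewrite inE.
rewrite mulnC -sum_nat_const; apply: eq_bigr => E /imsetP [[a b] hab ->].
rewrite inE /= in hab.
have ab : a != b by apply: contraTneq hab => ->; rewrite ei.
rewrite sum1dep_card.
rewrite (_ : [set _ | _] = [set (a, b); (b, a)]).
  by rewrite cards2 xpair_eqE (negbTE ab).
apply/setP => [[x y]]; rewrite !inE /= !xpair_eqE.
case exy: (e x y) => /=.
  have xy : x != y by apply: contraTneq exy => ->; rewrite ei.
  by rewrite set2_eq.
apply/esym/negbTE; apply/negP => /orP[] /andP[/eqP ? /eqP ?]; subst; move: exy; rewrite ?hab //.
by rewrite es hab.
Qed.

Lemma sumG (B : finType) (e : rel B) :
  \sum_(x : 'I_1 + B) \sum_(y : 'I_1 + B) (G e x y : nat) = 2 * #|B| + \sum_(x : B) \sum_(y : B) (e x y : nat).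
Proof.
have E1 : forall x, \sum_(y : 'I_1 + B) (G e (inr x) y : nat) = 1 + \sum_(y:B) (e x y : nat).
  by move=> x; rewrite big_sumType big_ord1.
have S1 : \sum_(i : B) 1 = #|B| := sum1_card B.
rewrite big_sumType big_ord1 (eq_bigr _ (fun x _ => E1 x)) big_sumType big_ord1 /=.
by rewrite big_split /= S1 add0n addnA addnn -mul2n.
Qed.

Lemma sumD (A B : finType) (eA : rel A) (eB : rel B) :
  \sum_(x : A + B) \sum_(y : A + B) (dunion eA eB x y : nat) =
  \sum_(x : A) \sum_(y : A) (eA x y : nat) + \sum_(x : B) \sum_(y : B) (eB x y : nat).
Proof.
have E1 : forall x, \sum_(y : A + B) (dunion eA eB (inl x) y : nat) = \sum_(y:A) (eA x y : nat).
  by move=> x; rewrite big_sumType /= [X in _ + X]big1 ?addn0.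
have E2 : forall x, \sum_(y : A + B) (dunion eA eB (inr x) y : nat) = \sum_(y:B) (eB x y : nat).
  by move=> x; rewrite big_sumType /= [X in X + _]big1 ?add0n.
by rewrite big_sumType (eq_bigr _ (fun x _ => E1 x)) (eq_bigr _ (fun x _ => E2 x)).
Qed.


Lemma Ksym n : symmetric (Kcomp n). Proof. by move=> x y; rewrite /Kcomp eq_sym. Qed.
Lemma Kirr n : irreflexive (Kcomp n). Proof. by move=> x; rewrite /Kcomp eqxx. Qed.
Lemma Psym : symmetric (Path 4). Proof. by move=> x y; rewrite /Path orbC. Qed.
Lemma Pirr : irreflexive (Path 4).
Proof. by move=> [[|[|[|[|?]]]] ?]. Qed.

Lemma K1deg2 : deg2 (Kcomp 1).
Proof. by move=> [[|?] ?] [[|?] ?]. Qed.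
Lemma K1cn1 : cn1 (Kcomp 1).
Proof. by move=> [[|?] ?] [[|?] ?]. Qed.
Lemma K1sat : satp (Kcomp 1).
Proof. by move=> [[|?] ?] [[|?] ?]. Qed.
Lemma K1sum : \sum_(x : 'I_1) \sum_(y : 'I_1) (Kcomp 1 x y : nat) = 0.
Proof. by rewrite !big_ord1. Qed.

Lemma K2deg2 : deg2 (Kcomp 2).
Proof. by move=> [[|[|?]] ?] [[|[|?]] ?] [[|[|?]] ?] [[|[|?]] ?]. Qed.
Lemma K2cn1 : cn1 (Kcomp 2).
Proof. by move=> [[|[|?]] ?] [[|[|?]] ?] [[|[|?]] ?] [[|[|?]] ?]. Qed.
Lemma K2sat : satp (Kcomp 2).
Proof. by move=> u v uv; rewrite /Kcomp uv. Qed.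
Lemma K2sum : \sum_(x : 'I_2) \sum_(y : 'I_2) (Kcomp 2 x y : nat) = 2.
Proof. by rewrite !big_ord_recr !big_ord0. Qed.

Lemma P4deg2 : deg2 (Path 4).
Proof. by move=> [[|[|[|[|?]]]] ?] [[|[|[|[|?]]]] ?] [[|[|[|[|?]]]] ?] [[|[|[|[|?]]]] ?]. Qed.
Lemma P4cn1 : cn1 (Path 4).
Proof. by move=> [[|[|[|[|?]]]] ?] [[|[|[|[|?]]]] ?] [[|[|[|[|?]]]] ?] [[|[|[|[|?]]]] ?]. Qed.
Lemma P4sum : \sum_(x : 'I_4) \sum_(y : 'I_4) (Path 4 x y : nat) = 6.
Proof. by rewrite !big_ord_recr !big_ord0. Qed.

Notation o4 n := (@Ordinal 4 n isT).
Lemma two1 : two_nb (Path 4) (o4 1). Proof. by exists (o4 0), (o4 2). Qed.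
Lemma two2 : two_nb (Path 4) (o4 2). Proof. by exists (o4 1), (o4 3). Qed.
Lemma sq03 : sq_nb (Path 4) (o4 0) (o4 3). Proof. by exists (o4 2), (o4 1). Qed.

Lemma P4sat : satp (Path 4).
Proof.
move=> [[|[|[|[|?]]]] p] [[|[|[|[|?]]]] q] //= _ _.
- by apply: Or42; rewrite (bool_irrelevance q isT); exact: two2.
- by apply: Or43; rewrite (bool_irrelevance q isT) (bool_irrelevance p isT); exact: sq03.
- by apply: Or41; rewrite (bool_irrelevance p isT); exact: two1.
- by apply: Or41; rewrite (bool_irrelevance p isT); exact: two2.
- by apply: Or44; rewrite (bool_irrelevance q isT) (bool_irrelevance p isT); exact: sq03.
- by apply: Or42; rewrite (bool_irrelevance q isT); exact: two1.
Qed.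


Lemma main_gen k (X : rel 'I_k) m (H : rel 'I_m) sX : in_Hfam H ->
  symmetric X -> irreflexive X -> deg2 X -> cn1 X -> satp X ->
  \sum_(x : 'I_k) \sum_(y : 'I_k) (X x y : nat) = sX ->
  K23_saturated (G (dunion X H)) /\ 2 * #|edges (G (dunion X H))| = 2 * (k + m) + (sX + 2 * m).
Proof.
move=> HH xs xi xd xc xsat xsum.
have ds := Dsym xs (Hsym HH); have di := Dirr xi (Hirr HH).
split.
  split; first exact: noK23 (Ddeg2 xd (Hdeg2 HH)) (Dcn1 xc (Hcn1 HH)).
  apply: satG => //; exact: Dsat xsat (Htwo HH).
rewrite edges2; last 2 first.
- exact: Gsym.
- by move=> [x|x] //=; rewrite /Kcomp eqxx.
by rewrite sumG sumD xsum (Hsum HH) card_sum !card_ord.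
Qed.

Lemma half2 a b : 2 * a = 2 * b -> a = b.
Proof. by move/eqP; rewrite eqn_pmul2l // => /eqP. Qed.

Theorem mainTheorem2 :
  forall (m : nat) (H : rel 'I_m), in_Hfam H ->
    (* n = m + 2 : K_1 * (K_1 + H) *)
    (K23_saturated (gjoin (Kcomp 1) (dunion (Kcomp 1) H)) /\
     #|edges (gjoin (Kcomp 1) (dunion (Kcomp 1) H))| = 2 * (m + 2) - 3) /\
    (* n = m + 3 : K_1 * (K_2 + H) *)
    (K23_saturated (gjoin (Kcomp 1) (dunion (Kcomp 2) H)) /\
     #|edges (gjoin (Kcomp 1) (dunion (Kcomp 2) H))| = 2 * (m + 3) - 3) /\
    (* n = m + 5 : K_1 * (P_4 + H) *)
    (K23_saturated (gjoin (Kcomp 1) (dunion (Path 4) H)) /\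
     #|edges (gjoin (Kcomp 1) (dunion (Path 4) H))| = 2 * (m + 5) - 3).
Proof.
move=> m H HH.
have [s1 e1] := main_gen HH (@Ksym 1) (@Kirr 1) K1deg2 K1cn1 K1sat K1sum.
have [s2 e2] := main_gen HH (@Ksym 2) (@Kirr 2) K2deg2 K2cn1 K2sat K2sum.
have [s3 e3] := main_gen HH Psym Pirr P4deg2 P4cn1 P4sat P4sum.
split; [|split]; (split; first by []); apply: half2.
- by rewrite e1; apply/eqP; rewrite -!plusE -!multE -!minusE; apply/eqP; lia.
- by rewrite e2; apply/eqP; rewrite -!plusE -!multE -!minusE; apply/eqP; lia.
- by rewrite e3; apply/eqP; rewrite -!plusE -!multE -!minusE; apply/eqP; lia.
Qed.
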